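(* Let $G$ be a graph with $m\ge 1$ edges and let $a_1<a_2<\cdots<a_m$ be positive integers. Then there exist an orientation $D$ of $G$ and a bijection $\tau:A(D)\to\{a_1,\dots,a_m\}$ such that $s_{(D,\tau)}(v)\ge -a_m$ for every vertex $v\in V(G)$.
   Context: All graphs are finite and simple. An orientation $D$ of $G$ assigns to each edge one direction; $A(D)$ is its arc set. For an injective map $\tau$ from $A(D)$ to a set of positive integers and a vertex $u$, $s_{(D,\tau)}(u)$ is the sum of $\tau$-labels of all arcs entering $u$ minus the sum of $\tau$-labels of all arcs leaving $u$, with $s_{(D,\tau)}(u)=0$ if $u$ is isolated. *)

(* Defs.v *)
From HB Require Import structures.
From mathcomp Require Import all_boot all_order all_algebra.
Set Implicit Arguments. Unset Strict Implicit. Unset Printing Implicit Defensive.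
Import Order.TTheory GRing.Theory Num.Theory.

Definition simple_graph (T : finType) (e : rel T) : Prop :=
  symmetric e /\ irreflexive e.

Definition edges (T : finType) (e : rel T) : {set {set T}} :=
  [set [set p.1; p.2] | p in [set q : T * T | e q.1 q.2]].

Definition orientation (T : finType) (e : rel T) (D : rel T) : Prop :=
  (forall x y, D x y -> e x y) /\ (forall x y, e x y -> D x y = ~~ D y x).

Definition arcs (T : finType) (D : rel T) : {set T * T} :=
  [set p : T * T | D p.1 p.2].

Definition s_lab (T : finType) (D : rel T) (tau : T * T -> nat) (u : T) : int :=
  ((\sum_(w | D w u) (tau (w, u))%:Z) - (\sum_(w | D u w) (tau (u, w))%:Z))%R.

(* Main.v *)
Require Import Defs.
From HB Require Import structures.
From mathcomp Require Import all_boot all_order all_algebra.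
Import Order.TTheory GRing.Theory Num.Theory.
From mathcomp Require Import zify.
Set Implicit Arguments. Unset Strict Implicit. Unset Printing Implicit Defensive.

Definition rem_edge (T : finType) (e : rel T) (u v : T) : rel T :=
  fun x y => e x y && ([set x; y] != [set u; v]).

Lemma edges_rem (T : finType) (e : rel T) u v :
  edges (rem_edge e u v) = edges e :\ [set u; v].
Proof.
apply/setP => S; rewrite in_setD1.
apply/imsetP/andP.
- case=> p; rewrite inE /rem_edge => /andP [epq neq] ->; split => //.
  by apply/imsetP; exists p; rewrite ?inE.
- case=> neq /imsetP [p]; rewrite inE => epq Sdef.
  by exists p => //; rewrite inE /rem_edge epq -Sdef neq.
Qed.

Lemma edge_in (T : finType) (e : rel T) u v : e u v -> [set u; v] \in edges e.
Proof. by move=> h; apply/imsetP; exists (u, v); rewrite ?inE. Qed.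

Lemma sum_add1 (T : finType) (P P' : pred T) (F : T -> int) z :
  ~~ P' z -> (forall w, P w = P' w || (w == z)) ->
  (\sum_(w | P w) F w = F z + \sum_(w | P' w) F w)%R.
Proof.
move=> nP HP; rewrite (bigD1 z) /=; last by rewrite HP eqxx orbT.
congr (_ + _)%R; apply: eq_bigl => w; rewrite HP.
case: eqVneq => [->|_] /=; first by rewrite andbF (negbTE nP).
by rewrite orbF andbT.
Qed.

Lemma s_isolated (T : finType) (D : rel T) tau r :
  (forall w, ~~ D w r) -> (forall w, ~~ D r w) -> s_lab D tau r = 0%R.
Proof.
move=> h1 h2; rewrite /s_lab big_pred0; last by move=> w; exact: negbTE (h1 w).
by rewrite big_pred0 ?subrr // => w; exact: negbTE (h2 w).
Qed.

Lemma step (T : finType) (e : rel T) (u v : T) (x M : nat) (a a' : seq nat)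
  (D' : rel T) (tau' : T * T -> nat) :
  simple_graph e -> e u v ->
  (forall y, (y \in a) = (y == x) || (y \in a')) -> x \notin a' -> (x <= M)%N ->
  orientation (rem_edge e u v) D' -> {in arcs D' &, injective tau'} ->
  (forall p, p \in arcs D' -> tau' p \in a') ->
  (forall y, y \in a' -> exists2 p, p \in arcs D' & tau' p = y) ->
  (forall w, (- x%:Z <= s_lab D' tau' w)%R) -> (0 <= s_lab D' tau' u)%R ->
  exists (D : rel T) (tau : T * T -> nat),
    [/\ orientation e D,
        {in arcs D &, injective tau},
        (forall p, p \in arcs D -> tau p \in a),
        (forall y, y \in a -> exists2 p, p \in arcs D & tau p = y) &
        (forall w, (- M%:Z <= s_lab D tau w)%R) /\
        (0 <= s_lab D tau v)%R].
Proof.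
move=> [esym eirr] euv Ha xa' xM [D'e D'or] inj' into' onto' sb' su'.
have nuv : u != v by apply/eqP => E; move: euv; rewrite E eirr.
have D'uv : ~~ D' u v.
  by apply/negP => /D'e; rewrite /rem_edge eqxx andbF.
have D'vu : ~~ D' v u.
  by apply/negP => /D'e; rewrite /rem_edge setUC eqxx andbF.
have D'ne : forall p, D' p.1 p.2 -> p != (u, v).
  by move=> [p1 p2] /= h; apply/eqP => [[E1 E2]]; move: h; rewrite E1 E2 (negbTE D'uv).
pose D : rel T := fun y z => D' y z || ((y, z) == (u, v)).
pose tau : T * T -> nat := fun p => if p == (u, v) then x else tau' p.
have taue : forall p, D' p.1 p.2 -> tau p = tau' p.
  by move=> p h; rewrite /tau (negbTE (D'ne p h)).
have arcsD : forall p, (p \in arcs D) = (p \in arcs D') || (p == (u, v)).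
  by move=> [p1 p2]; rewrite !inE.
exists D, tau; split.
- split.
  + move=> y z; rewrite /D => /orP [/D'e /andP [] //|/eqP [-> ->] //].
  + move=> y z eyz; rewrite /D.
    case: (eqVneq [set y; z] [set u; v]) => Hs.
    * have : (y == u) && (z == v) || (y == v) && (z == u).
        have : y \in [set u; v] by rewrite -Hs !inE eqxx.
        have : z \in [set u; v] by rewrite -Hs !inE eqxx orbT.
        rewrite !inE => /orP [] /eqP zE /orP [] /eqP yE; subst;
          rewrite ?eqxx ?orbT //; by move: eyz; rewrite eirr.
      case/orP => /andP [/eqP -> /eqP ->].
      -- by rewrite eqxx orbT (negbTE D'vu) xpair_eqE eq_sym (negbTE nuv).
      -- by rewrite eqxx orbT (negbTE D'vu) xpair_eqE eq_sym (negbTE nuv).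
    * have e'yz : rem_edge e u v y z by rewrite /rem_edge eyz Hs.
      have Hyz : ((y, z) == (u, v)) = false.
        by apply/negbTE/eqP => [[E1 E2]]; move: Hs; rewrite E1 E2 eqxx.
      have Hzy : ((z, y) == (u, v)) = false.
        by apply/negbTE/eqP => [[E1 E2]]; move: Hs; rewrite E1 E2 setUC eqxx.
      by rewrite Hyz Hzy !orbF (D'or _ _ e'yz).
- move=> p q; rewrite !arcsD => /orP [pa|/eqP ->] /orP [qa|/eqP ->] //.
  + rewrite (taue p) ?(taue q); [|by rewrite inE in qa|by rewrite inE in pa].
    exact: inj'.
  + rewrite (taue p) /tau ?eqxx; last by rewrite inE in pa.
    by move=> E; move: (into' p pa); rewrite E (negbTE xa').
  + rewrite (taue q) /tau ?eqxx; last by rewrite inE in qa.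
    by move=> E; move: (into' q qa); rewrite -E (negbTE xa').
- move=> p; rewrite arcsD => /orP [pa|/eqP ->].
  + by rewrite Ha (taue p) ?into' ?orbT //; rewrite inE in pa.
  + by rewrite Ha /tau eqxx eqxx.
- move=> y; rewrite Ha => /orP [/eqP ->|ya'].
  + by exists (u, v); rewrite ?arcsD ?eqxx ?orbT // /tau eqxx.
  + case: (onto' y ya') => p pa <-; exists p; first by rewrite arcsD pa.
    by apply: taue; rewrite inE in pa.
-
  have tauuv : tau (u, v) = x by rewrite /tau eqxx.
  have sv : s_lab D tau v = (x%:Z + s_lab D' tau' v)%R.
    rewrite /s_lab (@sum_add1 _ (fun w => D w v) (fun w => D' w v) _ u) //; last first.
      by move=> w; rewrite /D xpair_eqE eqxx andbT.
    rewrite tauuv addrA; congr (_ + _ - _)%R.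
      by apply: eq_bigr => w h; rewrite (taue (w, v)).
    rewrite (eq_bigl (fun w => D' v w)); last first.
      by move=> w; rewrite /D xpair_eqE eq_sym (negbTE nuv) orbF.
    by apply: eq_bigr => w h; rewrite (taue (v, w)).
  have su : s_lab D tau u = (s_lab D' tau' u - x%:Z)%R.
    rewrite /s_lab (@sum_add1 _ (fun w => D u w) (fun w => D' u w) _ v) //; last first.
      by move=> w; rewrite /D xpair_eqE eqxx.
    rewrite tauuv.
    rewrite (eq_bigl (fun w => D' w u)); last first.
      by move=> w; rewrite /D xpair_eqE (negbTE nuv) andbF orbF.
    rewrite opprD addrA addrAC; congr (_ - _ - _)%R.
      by apply: eq_bigr => w h; rewrite (taue (w, u)).
    by apply: eq_bigr => w h; rewrite (taue (u, w)).
  have sw : forall w, w != u -> w != v -> s_lab D tau w = s_lab D' tau' w.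
    move=> w wu wv; rewrite /s_lab.
    rewrite (eq_bigl (fun y => D' y w)); last first.
      by move=> y; rewrite /D xpair_eqE (negbTE wv) andbF orbF.
    rewrite [X in (_ - X)%R](eq_bigl (fun y => D' w y)); last first.
      by move=> y; rewrite /D xpair_eqE (negbTE wu) orbF.
    congr (_ - _)%R; apply: eq_bigr => y h.
      by rewrite (taue (y, w)).
    by rewrite (taue (w, y)).
  have xM' : (x%:Z <= M%:Z)%R by rewrite lez_nat.
  have x0 : (0 <= x%:Z)%R by [].
  split.
  + move=> w; case: (eqVneq w u) => [->|wu].
      by rewrite su; lia.
    case: (eqVneq w v) => [->|wv].
      by rewrite sv; have := sb' v; lia.
    by rewrite sw //; have := sb' w; lia.
  + by rewrite sv; have := sb' v; lia.
Qed.

Lemma max_exists (a : seq nat) : a != [::] ->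
  exists2 x, x \in a & forall y, y \in a -> (y <= x)%N.
Proof.
elim: a => [//|z s IH] _.
case: (eqVneq s [::]) => [->|sne].
  by exists z; rewrite ?inE ?eqxx // => y; rewrite inE => /eqP ->.
case: (IH sne) => x xs Hx.
case: (leqP z x) => zx.
  exists x; first by rewrite inE xs orbT.
  by move=> y; rewrite inE => /orP [/eqP ->|/Hx].
exists z; first by rewrite inE eqxx.
move=> y; rewrite inE => /orP [/eqP ->//|/Hx h]; exact: leq_trans h (ltnW zx).
Qed.

Lemma last_max (a : seq nat) : sorted leq a -> forall y, y \in a -> (y <= last 0 a)%N.
Proof.
case: a => [//|z s] /=.
elim: s z => [|t s IH] z /=.
  by move=> _ y; rewrite inE => /eqP ->.
move=> /andP [zt Hp] y; rewrite inE => /orP [/eqP ->|ys].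
  by apply: leq_trans zt (IH _ Hp t _); rewrite inE eqxx.
exact: IH Hp y ys.
Qed.

Lemma main_gen (T : finType) n : forall (e : rel T) (a : seq nat) (M : nat) (r : T),
  simple_graph e -> #|edges e| = n -> size a = n -> uniq a ->
  (forall y, y \in a -> (y <= M)%N) ->
  exists (D : rel T) (tau : T * T -> nat),
    [/\ orientation e D,
        {in arcs D &, injective tau},
        (forall p, p \in arcs D -> tau p \in a),
        (forall y, y \in a -> exists2 p, p \in arcs D & tau p = y) &
        (forall w, (- M%:Z <= s_lab D tau w)%R) /\
        (0 <= s_lab D tau r)%R].
Proof.
elim: n => [|n IH] e a M r Hg He Ha Hu HM.
- have a0 : a = [::] by apply: size0nil.
  have ne : forall y z, e y z = false.
    move=> y z; apply/negP => h; move: (edge_in h).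
    by rewrite (cards0_eq He) inE.
  have s0 : forall (tau : T * T -> nat) (w : T), s_lab (fun _ _ => false) tau w = 0%R.
    by move=> tau w; apply: s_isolated.
  exists (fun _ _ => false), (fun _ => 0%N); split.
  + by split => // y z; rewrite ne.
  + by move=> p q; rewrite inE.
  + by move=> p; rewrite inE.
  + by move=> y; rewrite a0.
  + by split => [w|]; rewrite s0 // oppr_le0.
- have [esym eirr] := Hg.
  have ane : a != [::] by apply/eqP => E; move: Ha; rewrite E.
  case: (max_exists ane) => x xa xmax.
  have gen : forall u v, e u v ->
    exists (D : rel T) (tau : T * T -> nat),
    [/\ orientation e D,
        {in arcs D &, injective tau},
        (forall p, p \in arcs D -> tau p \in a),
        (forall y, y \in a -> exists2 p, p \in arcs D & tau p = y) &
        (forall w, (- M%:Z <= s_lab D tau w)%R) /\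
        (0 <= s_lab D tau v)%R].
    move=> u v euv.
    have Hg' : simple_graph (rem_edge e u v).
      split; first by move=> y z; rewrite /rem_edge esym setUC.
      by move=> y; rewrite /rem_edge eirr.
    have He' : #|edges (rem_edge e u v)| = n.
      move: He; rewrite (cardsD1 [set u; v]) edge_in // edges_rem.
      by rewrite add1n => [[]].
    have Ha' : size (rem x a) = n by rewrite size_rem // Ha.
    have Hu' : uniq (rem x a) by apply: rem_uniq.
    have HM' : forall y, y \in rem x a -> (y <= x)%N.
      by move=> y /mem_rem; apply: xmax.
    case: (IH _ _ _ u Hg' He' Ha' Hu' HM') => D' [tau' [Hor Hinj Hinto Honto [Hsb Hsu]]].
    apply: (@step T e u v x M a (rem x a) D' tau') => //.
    + by move=> y; rewrite (perm_mem (perm_to_rem xa)) in_cons.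
    + by rewrite mem_rem_uniqF.
    + exact: HM.
  case: (pickP (fun w => e w r)) => [w ewr|none].
  + exact: gen w r ewr.
  + have : (0 < #|edges e|)%N by rewrite He.
    case/card_gt0P => S /imsetP [p]; rewrite inE => ep _.
    case: (gen _ _ ep) => D [tau [[De Dor] Hinj Hinto Honto [Hsb _]]].
    exists D, tau; split => //; split => //.
    rewrite s_isolated // => w; apply/negP => /De.
      by rewrite none.
    by rewrite esym none.
Qed.

Theorem lemma2p1 (T : finType) (e : rel T) (a : seq nat) :
  simple_graph e ->
  (1 <= #|edges e|)%N ->
  size a = #|edges e| ->
  sorted ltn a ->
  all (fun x => 0 < x)%N a ->
  exists (D : rel T) (tau : T * T -> nat),
    [/\ orientation e D,
        {in arcs D &, injective tau},
        (forall p, p \in arcs D -> tau p \in a),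
        (forall x, x \in a -> exists2 p, p \in arcs D & tau p = x) &
        (forall v : T, (- (last 0%N a)%:Z <= s_lab D tau v)%R)].
Proof.
move=> Hg He Ha Hs Hp.
case/card_gt0P: He => S /imsetP [p] _ _.
have [Hu Hl] : uniq a /\ sorted leq a by move: Hs; rewrite ltn_sorted_uniq_leq => /andP.
have [D [tau [H1 H2 H3 H4 [H5 _]]]] :=
  @main_gen T #|edges e| e a (last 0%N a) p.1 Hg erefl Ha Hu (last_max Hl).
by exists D, tau; split.
Qed.
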